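(* Let $k$ be a field and let $\mathcal C$ be a conilpotent coalgebra over $k$ such that the $k$-vector space $H^1(\mathcal C)$ is finite-dimensional. Then the forgetful functor from the category of left $\mathcal C$-contramodules to the category of left $\mathcal C^\vee$-modules, $\mathcal C\text{-contra}\to\mathcal C^\vee\text{-mod}$, is fully faithful. Moreover, for any dense subring $R$ of the topological ring $\mathcal C^\vee$, the forgetful functor $\mathcal C\text{-contra}\to R\text{-mod}$ is fully faithful.
   Context: A coalgebra $\mathcal C$ over $k$ is a vector space with coassociative comultiplication $\mu:\mathcal C\to\mathcal C\otimes_k\mathcal C$, $c\mapsto\sum c_{(1)}\otimes c_{(2)}$, and counit $\varepsilon:\mathcal C\to k$. It is coaugmented if endowed with a coalgebra morphism $\gamma:k\to\mathcal C$; then $\mathcal C_+=\mathcal C/\gamma(k)$ is a coalgebra without counit, and $\mathcal C$ is called conilpotent if for every $x\in\mathcal C_+$ some iterated comultiplication $\mathcal C_+\to\mathcal C_+^{\otimes m+1}$ annihilates $x$ (such a coaugmentation is then unique). One sets $H^1(\mathcal C)=\ker(\mathcal C_+\to\mathcal C_+\otimes_k\mathcal C_+)$ (the kernel of the induced comultiplication). A left $\mathcal C$-contramodule is a $k$-vector space $P$ with a linear map $\pi_P:\mathrm{Hom}_k(\mathcal C,P)\to P$ such that (contraassociativity) the two maps $\mathrm{Hom}_k(\mathcal C,\mathrm{Hom}_k(\mathcal C,P))\cong\mathrm{Hom}_k(\mathcal C\otimes_k\mathcal C,P)\rightrightarrows\mathrm{Hom}_k(\mathcal C,P)$, one induced by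 $\mu$ and the other by $\pi_P$, have equal compositions with $\pi_P$ (here $\mathrm{Hom}_k(V,\mathrm{Hom}_k(U,W))\cong\mathrm{Hom}_k(U\otimes_k V,W)$ is used), and (contraunitality) the composition $P\to\mathrm{Hom}_k(\mathcal C,P)\to P$ of the map induced by $\varepsilon$ with $\pi_P$ is the identity; morphisms are linear maps commuting with the contraactions. The dual vector space $\mathcal C^\vee=\mathrm{Hom}_k(\mathcal C,k)$ is an associative algebra with multiplication $(\phi\psi)(c)=\sum\psi(c_{(1)})\phi(c_{(2)})$, and every left $\mathcal C$-contramodule $P$ is a left $\mathcal C^\vee$-module via $\phi\cdot p=\pi_P(c\mapsto\phi(c)p)$; this defines the forgetful functor. $\mathcal C^\vee$ carries the (pseudo-compact) topology in which the annihilators of finite-dimensional subspaces of $\mathcal C$ form a base of neighborhoods of zero; a dense subring $R$ is a subring (containing the unit) dense in this topology, and $R$-modules structures on contramodules are obtained by restriction. *)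

(* Defs.v *)
(* MathComp has no tensor product of arbitrary vector spaces, so an element of
   C (x) C is represented by a finite list of pairs  [:: (a_1,b_1); ...]
   standing for  sum_i a_i (x) b_i ; equalities of tensors are expressed by
   testing against all multilinear forms (which separate points of a tensor
   product over a field). *)
From HB Require Import structures.
From mathcomp Require Import all_boot all_algebra.
Set Implicit Arguments. Unset Strict Implicit. Unset Printing Implicit Defensive.
Import GRing.Theory.
Local Open Scope ring_scope.

Definition islin (k : fieldType) (U V : lmodType k) (f : U -> V) : Prop :=
  forall (a : k) (x y : U), f (a *: x + y) = a *: f x + f y.

Definition lform (k : fieldType) (U : lmodType k) (f : U -> k) : Prop :=
  forall (a : k) (x y : U), f (a *: x + y) = a * f x + f y.

Definition bilin_form (k : fieldType) (C : lmodType k) (b : C -> C -> k) : Prop :=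
  (forall y, lform (fun x => b x y)) /\ (forall x, lform (b x)).

Definition trilin_form (k : fieldType) (C : lmodType k) (t : C -> C -> C -> k) : Prop :=
  [/\ forall y z, lform (fun x => t x y z),
      forall x z, lform (fun y => t x y z) &
      forall x y, lform (t x y)].

Definition tsum (C : Type) (V : nmodType) (s : seq (C * C)) (F : C -> C -> V) : V :=
  \sum_(ab <- s) F ab.1 ab.2.

Definition is_coalgebra (k : fieldType) (C : lmodType k)
    (mu : C -> seq (C * C)) (eps : C -> k) : Prop :=
  [/\ lform eps,
      (forall b, bilin_form b -> lform (fun c => tsum (mu c) b)),
      (forall t, trilin_form t -> forall c,
          tsum (mu c) (fun a b => tsum (mu a) (fun a' b' => t a' b' b))
        = tsum (mu c) (fun a b => tsum (mu b) (fun a' b' => t a a' b'))),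
      (forall c, tsum (mu c) (fun a b => eps a *: b) = c) &
      (forall c, tsum (mu c) (fun a b => eps b *: a) = c)].

(* gamma : k -> C, 1 |-> e, is a coalgebra morphism *)
Definition coaugmentation (k : fieldType) (C : lmodType k)
    (mu : C -> seq (C * C)) (eps : C -> k) (e : C) : Prop :=
  eps e = 1 /\ (forall b, bilin_form b -> tsum (mu e) b = b e e).

(* iterated comultiplication C -> C^{(x) m+1}, as a list of simple tensors
   (each a list of m+1 vectors) *)
Fixpoint iter_mu (k : fieldType) (C : lmodType k) (mu : C -> seq (C * C))
    (m : nat) (c : C) : seq (seq C) :=
  match m with
  | 0 => [:: [:: c]]
  | m'.+1 => flatten [seq (match l with
                          | y :: r => [seq [:: ab.1, ab.2 & r] | ab <- mu y]
                          | [::] => [::] end) | l <- iter_mu mu m' c]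
  end.

(* n-linear forms on C, given on lists of length n *)
Definition multilin_form (k : fieldType) (C : lmodType k) (n : nat) (t : seq C -> k) : Prop :=
  forall (l r : seq C), (size l + size r).+1 = n ->
    lform (fun x => t (l ++ x :: r)).

(* n-linear forms on C that descend to C_+ = C / k e (vanish when one argument is e) *)
Definition kills_e (k : fieldType) (C : lmodType k) (e : C) (n : nat) (t : seq C -> k) : Prop :=
  forall (l r : seq C), (size l + size r).+1 = n -> t (l ++ e :: r) = 0.

(* conilpotency: every x in C_+ is annihilated by some iterated comultiplication
   C_+ -> C_+^{(x) m+1} (the latter being the image of iter_mu under C -> C_+) *)
Definition conilpotent (k : fieldType) (C : lmodType k)
    (mu : C -> seq (C * C)) (e : C) : Prop :=
  forall x : C, exists m : nat, forall t : seq C -> k,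
    multilin_form m.+1 t -> kills_e e m.+1 t ->
    \sum_(l <- iter_mu mu m x) t l = 0.

(* x in C represents an element of H^1(C) = ker(C_+ -> C_+ (x) C_+) *)
Definition in_H1 (k : fieldType) (C : lmodType k)
    (mu : C -> seq (C * C)) (e : C) (x : C) : Prop :=
  forall b, bilin_form b -> (forall y, b e y = 0) -> (forall y, b y e = 0) ->
    tsum (mu x) b = 0.

(* H^1(C) is finite dimensional: spanned (modulo k e) by finitely many vectors *)
Definition H1_findim (k : fieldType) (C : lmodType k)
    (mu : C -> seq (C * C)) (e : C) : Prop :=
  exists s : seq C, forall x : C, in_H1 mu e x ->
    exists (lam : k) (a : nat -> k), x = lam *: e + \sum_(i < size s) a i *: s`_i.

(* left C-contramodule structure pi : Hom_k(C,P) -> P (only its values on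
   linear maps matter) *)
Definition is_contramodule (k : fieldType) (C : lmodType k)
    (mu : C -> seq (C * C)) (eps : C -> k) (P : lmodType k) (pi : (C -> P) -> P) : Prop :=
  [/\ (forall f g : C -> P, islin f -> islin g -> (forall c, f c = g c) -> pi f = pi g),
      (forall (a : k) (f g : C -> P), islin f -> islin g ->
          pi (fun c => a *: f c + g c) = a *: pi f + pi g),
      (* contraassociativity, g : C -> Hom_k(C,P) linear, corresponding to
         h : C (x) C -> P, h (u (x) v) = g v u *)
      (forall g : C -> C -> P, (forall v, islin (g v)) ->
          (forall (a : k) x y c, g (a *: x + y) c = a *: g x c + g y c) ->
          pi (fun c => tsum (mu c) (fun c1 c2 => g c2 c1)) = pi (fun v => pi (g v))) &
      (forall p : P, pi (fun c => eps c *: p) = p)].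

Definition cact (k : fieldType) (C : lmodType k) (P : lmodType k)
    (pi : (C -> P) -> P) (phi : C -> k) (p : P) : P :=
  pi (fun c => phi c *: p).

Definition dual_mul (k : fieldType) (C : lmodType k) (mu : C -> seq (C * C))
    (phi psi : C -> k) : C -> k :=
  fun c => tsum (mu c) (fun c1 c2 => psi c1 * phi c2).

Definition dense_subring (k : fieldType) (C : lmodType k)
    (mu : C -> seq (C * C)) (eps : C -> k) (R : (C -> k) -> Prop) : Prop :=
  [/\ (forall r, R r -> lform r),
      R eps,
      (forall r s, R r -> R s -> R (fun c => r c - s c)),
      (forall r s, R r -> R s -> R (dual_mul mu r s)) &
      (* density: every phi + Ann(V), V finite dimensional (spanned by sv), meets R *)
      (forall phi, lform phi -> forall sv : seq C,
          exists r, R r /\ forall c, c \in sv -> r c = phi c)].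

Definition contra_morph (k : fieldType) (C : lmodType k) (P Q : lmodType k)
    (piP : (C -> P) -> P) (piQ : (C -> Q) -> Q) (f : P -> Q) : Prop :=
  islin f /\ (forall g : C -> P, islin g -> f (piP g) = piQ (fun c => f (g c))).

Definition Rmod_morph (k : fieldType) (C : lmodType k) (R : (C -> k) -> Prop)
    (P Q : lmodType k) (piP : (C -> P) -> P) (piQ : (C -> Q) -> Q) (f : P -> Q) : Prop :=
  (forall x y, f (x + y) = f x + f y) /\
  (forall r, R r -> forall p, f (cact piP r p) = cact piQ r (f p)).

(* Main.v *)
Require Import Defs.
From HB Require Import structures.
From mathcomp Require Import all_boot all_algebra.
From mathcomp Require Import boolp classical_sets.
From mathcomp Require Import ring.
Set Implicit Arguments. Unset Strict Implicit. Unset Printing Implicit Defensive.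
Import GRing.Theory.
Local Open Scope ring_scope.
Section LinBasics.
Variable k : fieldType.

Lemma islin0 (U V : lmodType k) (f : U -> V) : islin f -> f 0 = 0.
Proof. move=> H; have := H 1 0 0; rewrite !scale1r addr0 => E.
by apply: (addrI (f 0)); rewrite -E addr0. Qed.

Lemma islinD (U V : lmodType k) (f : U -> V) : islin f -> forall x y, f (x + y) = f x + f y.
Proof. by move=> H x y; have := H 1 x y; rewrite !scale1r. Qed.

Lemma islinZ (U V : lmodType k) (f : U -> V) : islin f -> forall a x, f (a *: x) = a *: f x.
Proof. by move=> H a x; rewrite -[a *: x]addr0 H islin0 // addr0. Qed.

Lemma islinN (U V : lmodType k) (f : U -> V) : islin f -> forall x, f (- x) = - f x.
Proof. by move=> H x; rewrite -scaleN1r islinZ // scaleN1r. Qed.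

Lemma islinB (U V : lmodType k) (f : U -> V) : islin f -> forall x y, f (x - y) = f x - f y.
Proof. by move=> H x y; rewrite islinD // islinN. Qed.

Lemma islin_sum (U V : lmodType k) (f : U -> V) (I : Type) (s : seq I) (F : I -> U) :
  islin f -> f (\sum_(i <- s) F i) = \sum_(i <- s) f (F i).
Proof.
move=> H; elim: s => [|a s IH]; first by rewrite !big_nil islin0.
by rewrite !big_cons islinD // IH.
Qed.

Lemma islin_ext (U V : lmodType k) (f g : U -> V) : islin g -> (forall x, f x = g x) -> islin f.
Proof. by move=> H E a x y; rewrite !E. Qed.

Lemma lform_islin (U : lmodType k) (t : U -> k) : lform t -> islin (t : U -> k^o).
Proof. by []. Qed.

Lemma islin_lform (U : lmodType k) (t : U -> k) : islin (t : U -> k^o) -> lform t.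
Proof. by []. Qed.

Lemma lf0 (U : lmodType k) (t : U -> k) : lform t -> t 0 = 0.
Proof. by move/lform_islin/islin0. Qed.
Lemma lfD (U : lmodType k) (t : U -> k) : lform t -> forall x y, t (x + y) = t x + t y.
Proof. by move/lform_islin/islinD. Qed.
Lemma lfZ (U : lmodType k) (t : U -> k) : lform t -> forall a x, t (a *: x) = a * t x.
Proof. by move/lform_islin/islinZ. Qed.
Lemma lfN (U : lmodType k) (t : U -> k) : lform t -> forall x, t (- x) = - t x.
Proof. by move/lform_islin/islinN. Qed.
Lemma lfB (U : lmodType k) (t : U -> k) : lform t -> forall x y, t (x - y) = t x - t y.
Proof. by move/lform_islin/islinB. Qed.
Lemma lf_sum (U : lmodType k) (t : U -> k) (I : Type) (s : seq I) (F : I -> U) :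
  lform t -> t (\sum_(i <- s) F i) = \sum_(i <- s) t (F i).
Proof. by move/lform_islin/islin_sum. Qed.
Lemma lform_ext (U : lmodType k) (f g : U -> k) : lform g -> (forall x, f x = g x) -> lform f.
Proof. by move=> H E a x y; rewrite !E. Qed.

Lemma lform_sum (U : lmodType k) (I : eqType) (s : seq I) (F : I -> U -> k) :
  (forall i, i \in s -> lform (F i)) -> lform (fun x => \sum_(i <- s) F i x).
Proof.
move=> H a x y; rewrite mulr_sumr -big_split /=; apply: eq_big_seq => i /H Hi.
by rewrite Hi.
Qed.

Lemma lform_sumT (U : lmodType k) (I : Type) (s : seq I) (F : I -> U -> k) :
  (forall i, lform (F i)) -> lform (fun x => \sum_(i <- s) F i x).
Proof.
move=> H a x y; rewrite mulr_sumr -big_split /=; apply: eq_bigr => i _.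
by rewrite H.
Qed.

Lemma lformM (U : lmodType k) (t : U -> k) (b : k) : lform t -> lform (fun x => b * t x).
Proof. by move=> H a x y; rewrite H mulrDr mulrCA. Qed.

Lemma lformMr (U : lmodType k) (t : U -> k) (b : k) : lform t -> lform (fun x => t x * b).
Proof. by move=> H a x y; rewrite H mulrDl mulrA. Qed.

Section Ext.
Variables (W P : lmodType k).

Definition goodg (G0 X : set (W * P)) :=
  [/\ (G0 `<=` X)%classic,
      (forall w p p', X (w, p) -> X (w, p') -> p = p') &
      (forall a w p w' p', X (w, p) -> X (w', p') -> X (a *: w + w', a *: p + p'))].

Lemma ext_graph (G0 : set (W * P)) : G0 (0, 0) -> goodg G0 G0 ->
  exists h : W -> P, islin h /\ forall w p, G0 (w, p) -> h w = p.
Proof.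
move=> G00 gG0.
pose PP := fun X : set (W * P) => X = set0 \/ goodg G0 X.
have [A [PA Amax]] : exists A, PP A /\ forall B, (A `<` B)%classic -> ~ PP B.
  apply: Zorn_bigcup => F FP Ftot.
  case: (pselect (exists X, F X /\ X <> set0)) => [[X0 [FX0 X0n]]|Hn]; last first.
    left; apply/seteqP; split => // wp [X FX Xwp].
    by apply: Hn; exists X; split => // E; rewrite E in Xwp.
  right.
  have gX : forall X wp, F X -> X wp -> goodg G0 X.
    move=> X wp FX Xwp; case: (FP X FX) => // E; by rewrite E in Xwp.
  have [/set0P [wp0 Hwp0]|//] : X0 != set0 \/ X0 = set0.
    by case: (eqVneq X0 set0); [right | left].
  have gX0 := gX _ _ FX0 Hwp0.
  split.
  - move=> wp Hwp; exists X0 => //; by case: gX0 => Hs _ _; apply: Hs.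
  - move=> w p p' [X1 FX1 H1] [X2 FX2 H2].
    have [S12|S21] := Ftot _ _ FX1 FX2.
    + by case: (gX _ _ FX2 H2) => _ Hf _; exact: (Hf _ _ _ (S12 _ H1) H2).
    + by case: (gX _ _ FX1 H1) => _ Hf _; exact: (Hf _ _ _ H1 (S21 _ H2)).
  - move=> a w p w' p' [X1 FX1 H1] [X2 FX2 H2].
    have [S12|S21] := Ftot _ _ FX1 FX2.
    + exists X2 => //; by case: (gX _ _ FX2 H2) => _ _ Hl; exact: (Hl _ _ _ _ _ (S12 _ H1) H2).
    + exists X1 => //; by case: (gX _ _ FX1 H1) => _ _ Hl; exact: (Hl _ _ _ _ _ H1 (S21 _ H2)).
have gA : goodg G0 A.
  case: PA => // A0; exfalso; apply: (Amax G0); last by right.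
  rewrite A0; split; first by [].
  by move=> E; exact: (E _ G00).
case: gA => G0A Afun Alin.
have dom : forall w, exists p, A (w, p).
  move=> w0; apply: contrapT => Hn.
  pose B := fun wp : W * P => exists a w p, A (w, p) /\ wp = (w + a *: w0, p).
  apply: (Amax B); last first.
    right; split.
    - move=> wp /G0A Awp; exists 0, wp.1, wp.2; split; first by case: wp Awp.
      by rewrite scale0r addr0; case: wp {Awp}.
    - move=> w p p' [a [w1 [p1 [A1 [E1 E1']]]]] [a' [w2 [p2 [A2 [E2 E2']]]]].
      subst; case: (eqVneq a a') => [Eaa|Naa].
      + subst; move: E2; move/eqP; rewrite (inj_eq (addIr _)) => /eqP Ew.
        by subst; apply: Afun A1 A2.
      + exfalso; apply: Hn; exists ((a - a')^-1 *: (p2 - p1)).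
        have : w0 = (a - a')^-1 *: (w2 - w1).
          apply: (@scalerI _ _ (a - a')); first by rewrite subr_eq0.
          rewrite scalerA mulfV ?subr_eq0 // scale1r scalerBl.
          have -> : a *: w0 = w2 + a' *: w0 - w1 by rewrite -E2 addrAC subrr add0r.
          by rewrite addrAC addrK.
        have Ad : A (w2 - w1, p2 - p1).
          by have := Alin (-1) _ _ _ _ A1 A2; rewrite !scaleN1r !(addrC (- _)).
        have A00 : A (0, 0) by apply: G0A.
        by move=> ->; have := Alin ((a - a')^-1) _ _ _ _ Ad A00; rewrite !addr0.
    - move=> c w p w' p' [a [w1 [p1 [A1 [-> ->]]]]] [a' [w2 [p2 [A2 [-> ->]]]]].
      exists (c * a + a'), (c *: w1 + w2), (c *: p1 + p2); split; first by apply: Alin.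
      congr (_, _); rewrite scalerDr scalerDl scalerA.
      by rewrite -!addrA; congr (_ + _); rewrite addrCA.
  split.
  - move=> wp Awp; exists 0, wp.1, wp.2; split; first by case: wp Awp.
    by rewrite scale0r addr0; case: wp {Awp}.
  - move=> E; have : B (w0, 0).
      have A00 : A (0, 0) by apply: G0A.
      by exists 1, 0, 0; split => //; rewrite scale1r add0r.
    by move=> HB; apply: Hn; exists 0; exact: E _ HB.
pose h w := projT1 (cid (dom w)).
have hP : forall w, A (w, h w) by move=> w; rewrite /h; case: cid.
exists h; split.
  by move=> a x y; apply: Afun (hP _) _; apply: Alin; apply: hP.
by move=> w p /G0A Awp; apply: Afun (hP w) Awp.
Qed.

End Ext.

Lemma ext_lin (U W P : lmodType k) (Phi : U -> W) (g : U -> P) :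
  islin Phi -> islin g -> (forall u, Phi u = 0 -> g u = 0) ->
  exists h : W -> P, islin h /\ forall u, h (Phi u) = g u.
Proof.
move=> HPhi Hg Hker.
pose G0 := fun wp : W * P => exists u, wp = (Phi u, g u).
have [||h [hl hP]] := @ext_graph W P G0.
- by exists 0; rewrite (islin0 HPhi) (islin0 Hg).
- split => //.
  + move=> w p p' [u [-> ->]] [u' [Ew ->]].
    apply/eqP; rewrite -subr_eq0 -islinB //; apply/eqP/Hker.
    by rewrite islinB // Ew subrr.
  + move=> a w p w' p' [u [-> ->]] [u' [-> ->]].
    by exists (a *: u + u'); rewrite HPhi Hg.
by exists h; split => // u; apply: hP; exists u.
Qed.

Lemma sep (V : lmodType k) (v : V) : (forall t : V -> k, lform t -> t v = 0) -> v = 0.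
Proof.
move=> H; apply: contrapT => /eqP vn0.
have [|||h [hl hP]] := @ext_lin k^o V k^o (fun a => a *: v) (fun a => a).
- by move=> a x y /=; rewrite scalerDl scalerA.
- by [].
- by move=> u /eqP; rewrite scaler_eq0 (negbTE vn0) orbF => /eqP.
have := H h (islin_lform hl); have := hP 1; rewrite scale1r => ->.
by move/eqP; rewrite oner_eq0.
Qed.

Lemma eq_by_forms (V : lmodType k) (v w : V) :
  (forall t : V -> k, lform t -> t v = t w) -> v = w.
Proof.
move=> H; apply/eqP; rewrite -subr_eq0; apply/eqP/sep => t Ht.
by rewrite lfB // H // subrr.
Qed.

End LinBasics.
Section Coalg.
Variables (k : fieldType) (C : lmodType k) (mu : C -> seq (C * C)) (eps : C -> k) (e : C).
Hypothesis HC : is_coalgebra mu eps.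
Hypothesis He : coaugmentation mu eps e.

Lemma eps_lf : lform eps. Proof. by case: HC. Qed.

Lemma mu_lin (b : C -> C -> k) : (forall y, lform (fun x => b x y)) -> (forall x, lform (b x)) ->
  lform (fun c => \sum_(ab <- mu c) b ab.1 ab.2).
Proof. by case: HC => _ H _ _ _ H1 H2; apply: (H b). Qed.

Lemma coass (t : C -> C -> C -> k) :
  (forall y z, lform (fun x => t x y z)) -> (forall x z, lform (fun y => t x y z)) ->
  (forall x y, lform (t x y)) -> forall c,
  \sum_(ab <- mu c) \sum_(ab' <- mu ab.1) t ab'.1 ab'.2 ab.2 =
  \sum_(ab <- mu c) \sum_(ab' <- mu ab.2) t ab.1 ab'.1 ab'.2.
Proof. by case: HC => _ _ H _ _ H1 H2 H3; apply: (H t). Qed.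

Lemma counitL c : \sum_(ab <- mu c) eps ab.1 *: ab.2 = c.
Proof. by case: HC => _ _ _ H _; apply: H. Qed.
Lemma counitR c : \sum_(ab <- mu c) eps ab.2 *: ab.1 = c.
Proof. by case: HC => _ _ _ _ H; apply: H. Qed.

Lemma eps_e : eps e = 1. Proof. by case: He. Qed.
Lemma mu_e (b : C -> C -> k) : (forall y, lform (fun x => b x y)) -> (forall x, lform (b x)) ->
  \sum_(ab <- mu e) b ab.1 ab.2 = b e e.
Proof. by case: He => _ H H1 H2; apply: (H b). Qed.

Lemma ml_at n (t : seq C -> k) l r : multilin_form n t -> (size l + size r).+1 = n ->
  lform (fun x => t (l ++ x :: r)).
Proof. by move=> H Hs; apply: H. Qed.

Definition E1 (l : seq C) : seq (seq C) :=
  match l with y :: r => [seq [:: ab.1, ab.2 & r] | ab <- mu y] | [::] => [::] end.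

Lemma iter_muS m c : iter_mu mu m.+1 c = flatten [seq E1 l | l <- iter_mu mu m c].
Proof. by []. Qed.

Lemma iter_mu_size m c l : l \in iter_mu mu m c -> size l = m.+1.
Proof.
elim: m l => [|m IH] l /=; first by rewrite inE => /eqP ->.
move=> /flattenP [s /mapP [l0 Hl0 ->]] Hl.
case: l0 Hl0 Hl => [|y r] Hl0 //= /mapP [ab _ ->] /=.
by have := IH _ Hl0 => /= [[->]].
Qed.

Definition TT (V : nmodType) m (F : seq C -> V) c := \sum_(l <- iter_mu mu m c) F l.

Lemma TT_head (V : nmodType) m (F : seq C -> V) c :
  TT m.+1 F c = TT m (fun l => \sum_(l' <- E1 l) F l') c.
Proof. by rewrite /TT iter_muS big_flatten /= big_map. Qed.

Lemma TT_S (V : nmodType) m (F : seq C -> V) c :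
  TT m.+1 F c = \sum_(ab <- mu c) TT m (fun l => F (rcons l ab.2)) ab.1.
Proof.
elim: m F c => [|m IH] F c.
  rewrite TT_head /TT /= big_cons big_nil addr0 /=.
  by rewrite big_map; apply: eq_bigr => ab _; rewrite big_cons big_nil addr0.
rewrite TT_head IH; apply: eq_bigr => ab _.
rewrite TT_head /TT; apply: eq_big_seq => l /iter_mu_size.
case: l => [|y r] //= _; rewrite !big_map; apply: eq_bigr => ab' _ /=.
by [].
Qed.

Lemma TT_lin m (t : seq C -> k) : multilin_form m.+1 t -> lform (TT m t).
Proof.
elim: m t => [|m IH] t Ht.
  by move=> a x y; rewrite /TT /= !big_cons !big_nil !addr0; apply: (Ht [::] [::] erefl).
apply: (lform_ext (g := fun c => \sum_(ab <- mu c) TT m (fun l => t (rcons l ab.2)) ab.1)).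
  apply: (mu_lin (b := fun a b => TT m (fun l => t (rcons l b)) a)) => [y|x].
  - apply: IH => l r Hs a u v; rewrite -!cats1 -!catA /= !cats1.
    by apply: (Ht l (rcons r y)); rewrite size_rcons addnS Hs.
  - apply: lform_sum => l /iter_mu_size Hl a u v.
    rewrite -!cats1; apply: (Ht l [::]); by rewrite Hl addn0.
by move=> c; rewrite TT_S.
Qed.

Lemma TT_left m (t : seq C -> k) c : multilin_form m.+2 t ->
  TT m.+1 t c = \sum_(ab <- mu c) TT m (fun l => t (ab.1 :: l)) ab.2.
Proof.
elim: m t c => [|m IH] t c Ht.
  rewrite TT_S; apply: eq_bigr => ab _.
  by rewrite /TT /= !big_cons !big_nil.
rewrite TT_S.
pose F := fun a1 a2 b => TT m (fun l => t (a1 :: rcons l b)) a2.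
transitivity (\sum_(ab <- mu c) \sum_(ab' <- mu ab.1) F ab'.1 ab'.2 ab.2).
  apply: eq_bigr => ab _; rewrite IH //.
  move=> l r Hs a x y; rewrite -!cats1 -!catA /=.
  by apply: (Ht l (r ++ [:: ab.2])); rewrite size_cat /= addn1 addnS Hs.
rewrite coass.
- apply: eq_bigr => ab _; rewrite TT_S; apply: eq_bigr => ab' _ //.
- move=> y z; apply: lform_sum => l /iter_mu_size Hl.
  by apply: (Ht [::] (rcons l z)); rewrite size_rcons Hl.
- move=> x z; apply: TT_lin => l r Hs.
  have -> : (fun u => t (x :: rcons (l ++ u :: r) z)) = (fun u => t ((x :: l) ++ u :: rcons r z)).
    by apply: funext => u; rewrite /= rcons_cat.
  by apply: Ht; rewrite /= size_rcons addSn addnS Hs.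
- move=> x y; apply: lform_sum => l /iter_mu_size Hl.
  have -> : (fun u => t (x :: rcons l u)) = (fun u => t ((x :: l) ++ u :: [::])).
    by apply: funext => u; rewrite cats1.
  by apply: Ht; rewrite /= Hl addn0.
Qed.

Definition deg_le m c := forall t, multilin_form m.+1 t -> kills_e e m.+1 t -> TT m t c = 0.

Lemma deg_leS m c : deg_le m c -> deg_le m.+1 c.
Proof.
move=> H t Ht Hk; rewrite TT_head; apply: H.
- move=> l r Hs; case: l Hs => [|y l] Hs /=.
  + apply: (lform_ext (g := fun x => \sum_(ab <- mu x) t (ab.1 :: ab.2 :: r))); last first.
      by move=> x; rewrite big_map.
    apply: (mu_lin (b := fun a b => t (a :: b :: r))) => [z|z].
    * by apply: (Ht [::] (z :: r)); rewrite /= -Hs.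
    * by apply: (Ht [:: z] r); rewrite /= -Hs.
  + apply: (lform_ext (g := fun x => \sum_(ab <- mu y) t ((ab.1 :: ab.2 :: l) ++ x :: r))); last first.
      by move=> x; rewrite big_map.
    apply: lform_sumT => ab; apply: Ht; by rewrite /= -Hs.
- move=> l r Hs; case: l Hs => [|y l] Hs /=.
  + rewrite big_map.
    rewrite (mu_e (b := fun a b => t (a :: b :: r))).
    * by apply: (Hk [::] (e :: r)); rewrite /= -Hs.
    * by move=> z; apply: (Ht [::] (z :: r)); rewrite /= -Hs.
    * by move=> z; apply: (Ht [:: z] r); rewrite /= -Hs.
  + rewrite big_map big1 // => ab _.
    by apply: (Hk (ab.1 :: ab.2 :: l) r); rewrite /= -Hs.
Qed.

Lemma deg_le_mono m n c : deg_le m c -> (m <= n)%N -> deg_le n c.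
Proof.
move=> H; elim: n => [|n IH]; first by rewrite leqn0 => /eqP <-.
by rewrite leq_eqVlt => /orP [/eqP <- //| /IH /deg_leS].
Qed.

End Coalg.
Section ContraBasics.
Variables (k : fieldType) (C : lmodType k) (mu : C -> seq (C * C)) (eps : C -> k).
Variables (Q : lmodType k) (piQ : (C -> Q) -> Q).
Hypothesis HQ : is_contramodule mu eps piQ.

Lemma pi_ext (f g : C -> Q) : islin g -> (forall c, f c = g c) -> piQ f = piQ g.
Proof.
move=> Hg E; case: HQ => H _ _ _; apply: H => //; exact: islin_ext Hg E.
Qed.

Lemma pi_lin (a : k) (f g : C -> Q) : islin f -> islin g ->
  piQ (fun c => a *: f c + g c) = a *: piQ f + piQ g.
Proof. by case: HQ => _ H _ _; apply: H. Qed.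

Lemma islin_cst0 : islin (fun _ : C => (0 : Q)).
Proof. by move=> a x y; rewrite scaler0 addr0. Qed.

Lemma pi0 : piQ (fun _ => 0) = 0.
Proof.
have E := pi_lin 1 islin_cst0 islin_cst0.
have E2 : piQ (fun c => 1 *: (fun _ => (0:Q)) c + (fun _ => 0) c) = piQ (fun _ => 0).
  by apply: pi_ext => [|c]; [exact: islin_cst0 | rewrite /= scaler0 addr0].
rewrite E2 scale1r in E.
by apply: (addrI (piQ (fun _ => 0))); rewrite -E addr0.
Qed.

Lemma islinDf (f g : C -> Q) : islin f -> islin g -> islin (fun c => f c + g c).
Proof.
move=> Hf Hg a x y; rewrite Hf Hg scalerDr -!addrA; congr (_ + _).
by rewrite addrCA.
Qed.

Lemma islinZf (b : k) (f : C -> Q) : islin f -> islin (fun c => b *: f c).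
Proof. by move=> Hf a x y; rewrite Hf scalerDr !scalerA mulrC. Qed.

Lemma islin_sumf (I : Type) (s : seq I) (F : I -> C -> Q) :
  (forall i, islin (F i)) -> islin (fun c => \sum_(i <- s) F i c).
Proof.
move=> H; elim: s => [|a s IH].
  by apply: (islin_ext islin_cst0) => c; rewrite big_nil.
by apply: (islin_ext (islinDf (H a) IH)) => c; rewrite big_cons.
Qed.

Lemma piD (f g : C -> Q) : islin f -> islin g -> piQ (fun c => f c + g c) = piQ f + piQ g.
Proof.
move=> Hf Hg; rewrite -[piQ f]scale1r -pi_lin //.
apply: pi_ext; first by apply: islinDf => //; exact: islinZf.
by move=> c; rewrite scale1r.
Qed.

Lemma piZ (b : k) (f : C -> Q) : islin f -> piQ (fun c => b *: f c) = b *: piQ f.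
Proof.
move=> Hf; rewrite -[b *: piQ f]addr0 -pi0 -pi_lin //; last exact: islin_cst0.
apply: pi_ext; first by apply: islinDf; [exact: islinZf | exact: islin_cst0].
by move=> c; rewrite addr0.
Qed.

Lemma pi_sum (I : Type) (s : seq I) (F : I -> C -> Q) :
  (forall i, islin (F i)) -> piQ (fun c => \sum_(i <- s) F i c) = \sum_(i <- s) piQ (F i).
Proof.
move=> H; elim: s => [|a s IH].
  rewrite big_nil; transitivity (piQ (fun _ => 0)); last exact: pi0.
  by apply: pi_ext; [exact: islin_cst0| move=> c; rewrite big_nil].
rewrite big_cons -IH -piD //; last exact: islin_sumf.
by apply: pi_ext; [apply: islinDf => //; exact: islin_sumf | move=> c; rewrite big_cons].
Qed.

Lemma pi_unit (p : Q) : piQ (fun c => eps c *: p) = p.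
Proof. by case: HQ => _ _ _ H; apply: H. Qed.

Lemma islin_sc (x : C -> k) (p : Q) : lform x -> islin (fun c => x c *: p).
Proof. by move=> Hx a u v; rewrite Hx scalerDl scalerA. Qed.

Lemma cactD (x : C -> k) (p q : Q) : lform x -> cact piQ x (p + q) = cact piQ x p + cact piQ x q.
Proof.
move=> Hx; rewrite /cact -piD; try exact: islin_sc.
by apply: pi_ext; [apply: islinDf; exact: islin_sc | move=> c; rewrite scalerDr].
Qed.

Lemma cactZ (x : C -> k) (a : k) (p : Q) : lform x -> cact piQ x (a *: p) = a *: cact piQ x p.
Proof.
move=> Hx; rewrite /cact -piZ; last exact: islin_sc.
by apply: pi_ext; [apply: islinZf; exact: islin_sc | move=> c; rewrite !scalerA mulrC].
Qed.

Lemma cactN (x : C -> k) (p : Q) : lform x -> cact piQ x (- p) = - cact piQ x p.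
Proof. by move=> Hx; rewrite -scaleN1r cactZ // scaleN1r. Qed.

Lemma cactB (x : C -> k) (p q : Q) : lform x -> cact piQ x (p - q) = cact piQ x p - cact piQ x q.
Proof. by move=> Hx; rewrite cactD // cactN. Qed.

Lemma cact_sum (x : C -> k) (I : Type) (s : seq I) (F : I -> Q) : lform x ->
  cact piQ x (\sum_(i <- s) F i) = \sum_(i <- s) cact piQ x (F i).
Proof.
move=> Hx; elim: s => [|a s IH].
  rewrite !big_nil /cact; transitivity (piQ (fun _ => 0)); last exact: pi0.
  apply: pi_ext; first exact: islin_cst0.
  by move=> c; rewrite scaler0.
by rewrite !big_cons cactD // IH.
Qed.

Lemma cact_addl (x y : C -> k) (p : Q) : lform x -> lform y ->
  cact piQ (fun c => x c + y c) p = cact piQ x p + cact piQ y p.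
Proof.
move=> Hx Hy; rewrite /cact -piD; try exact: islin_sc.
by apply: pi_ext; [apply: islinDf; exact: islin_sc | move=> c; rewrite scalerDl].
Qed.

Lemma pi_star (x : C -> k) (g : C -> Q) : lform x -> islin g ->
  piQ (fun c => \sum_(ab <- mu c) x ab.2 *: g ab.1) = cact piQ x (piQ g).
Proof.
move=> Hx Hg; case: HQ => _ _ H3 _.
have := H3 (fun v u => x v *: g u).
rewrite /tsum => ->.
- rewrite /cact; apply: pi_ext; first exact: islin_sc.
  by move=> v; rewrite piZ.
- by move=> v; apply: islinZf.
- by move=> a u v c; rewrite Hx scalerDl scalerA.
Qed.

End ContraBasics.
Section Words.
Variables (k : fieldType) (C : lmodType k) (mu : C -> seq (C * C)) (eps : C -> k) (e : C).
Hypothesis HC : is_coalgebra mu eps.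
Hypothesis He : coaugmentation mu eps e.
Variables (x : nat -> C -> k) (d : nat).
Hypothesis Hxl : forall i, lform (x i).
Hypothesis Hxe : forall i, x i e = 0.

Fixpoint words n : seq (seq nat) :=
  if n is n'.+1 then [seq i :: w | i <- iota 0 d, w <- words n'] else [:: [::]].

Lemma sum_wordsS (V : nmodType) n (F : seq nat -> V) :
  \sum_(w <- words n.+1) F w = \sum_(i <- iota 0 d) \sum_(w <- words n) F (i :: w).
Proof. by rewrite /= big_allpairs_dep. Qed.

Lemma words_size n w : w \in words n -> size w = n.
Proof.
elim: n w => [|n IH] w /=; first by rewrite inE => /eqP ->.
by move/allpairsPdep => [i [w' [_ Hw' ->]]] /=; rewrite IH.
Qed.

Fixpoint Vw (w : seq nat) (c : C) : k :=
  if w is i :: w' then \sum_(ab <- mu c) x i ab.1 * Vw w' ab.2 else eps c.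

Fixpoint pf (w : seq nat) (l : seq C) : k :=
  match w, l with
  | i :: w', y :: l' => x i y * pf w' l'
  | [::], _ => 1
  | _ :: _, [::] => 0
  end.

Lemma pf_ml w : multilin_form (size w) (pf w).
Proof.
move=> l r; elim: l w => [|y l IH] [|i w] //= Hs.
- by move=> a u v; rewrite Hxl mulrDl mulrA.
- by apply: lformM; apply: IH; case: Hs.
Qed.

Lemma pf_kill w : kills_e e (size w) (pf w).
Proof.
move=> l r; elim: l w => [|y l IH] [|i w] //= Hs.
- by rewrite Hxe mul0r.
- by rewrite IH ?mulr0 //; case: Hs.
Qed.

Lemma TT_scale m (a : k) (F : seq C -> k) c :
  TT mu m (fun l => a * F l) c = a * TT mu m F c.
Proof. by rewrite /TT mulr_sumr. Qed.

Lemma Vw_TT i w c : Vw (i :: w) c = TT mu (size w) (pf (i :: w)) c.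
Proof.
elim: w i c => [|j w IH] i c.
  rewrite /= /TT /= big_cons big_nil addr0 mulr1.
  rewrite -[in RHS](counitR HC c) lf_sum //; apply: eq_bigr => ab _.
  by rewrite lfZ // mulrC.
have E := TT_left HC c (@pf_ml (i :: j :: w)).
rewrite (_ : Vw (i :: j :: w) c = \sum_(ab <- mu c) x i ab.1 * Vw (j :: w) ab.2) //.
rewrite (_ : size (j :: w) = (size w).+1) // E.
by apply: eq_bigr => ab _; rewrite IH -TT_scale.
Qed.

Lemma Vw_lin w : lform (Vw w).
Proof.
case: w => [|i w]; first exact: (eps_lf HC).
apply: (lform_ext (g := TT mu (size w) (pf (i :: w)))); last by move=> c; rewrite Vw_TT.
by apply: (TT_lin HC); apply: (@pf_ml (i :: w)).
Qed.

Lemma Vw_vanish w c m : deg_le mu e m c -> (m < size w)%N -> Vw w c = 0.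
Proof.
case: w => [|i w] // Hd Hs; rewrite Vw_TT.
apply: (deg_le_mono HC He Hd); first by [].
- by apply: (@pf_ml (i :: w)).
- by apply: (@pf_kill (i :: w)).
Qed.

End Words.
Lemma sum_trunc (V : nmodType) (A : nat -> V) N M :
  (forall n, (N < n)%N -> A n = 0) -> (N <= M)%N ->
  \sum_(n < M.+1) A n = \sum_(n < N.+1) A n.
Proof.
move=> H; elim: M => [|M IH]; first by rewrite leqn0 => /eqP ->.
rewrite leq_eqVlt => /orP [/eqP -> //|].
by rewrite ltnS => HNM; rewrite big_ord_recr /= -IH // H ?addr0 // ltnS.
Qed.

Lemma leq_sum_seq (I : eqType) (s : seq I) (F : I -> nat) i : i \in s -> (F i <= \sum_(j <- s) F j)%N.
Proof. by move=> Hi; rewrite (big_rem i) //= leq_addr. Qed.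

Section Nakayama.
Variables (k : fieldType) (C : lmodType k) (mu : C -> seq (C * C)) (eps : C -> k) (e : C).
Hypothesis HC : is_coalgebra mu eps.
Hypothesis He : coaugmentation mu eps e.
Hypothesis Hconil : conilpotent mu e.
Variables (x : nat -> C -> k) (d : nat).
Hypothesis Hxl : forall i, lform (x i).
Hypothesis Hxe : forall i, x i e = 0.
Variables (Q : lmodType k) (piQ : (C -> Q) -> Q).
Hypothesis HQ : is_contramodule mu eps piQ.

Definition Ndeg (c : C) : nat := projT1 (cid (Hconil c)).
Lemma Ndeg_P c : deg_le mu e (Ndeg c) c.
Proof. by rewrite /Ndeg; case: cid => m Hm /=; exact: Hm. Qed.

Fixpoint sw (nxt : Q -> nat -> Q) (s0 : Q) (w : seq nat) : Q :=
  if w is i :: w' then nxt (sw nxt s0 w') i else s0.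

Local Notation V := (Vw mu eps x).

Lemma Vsum_vanish (F : seq nat -> Q) c n : (Ndeg c < n)%N ->
  \sum_(w <- words d n) V w c *: F w = 0.
Proof.
move=> Hn; rewrite big1_seq // => w /andP [_ /words_size Hw].
by rewrite (Vw_vanish HC He Hxl Hxe (@Ndeg_P c)) ?scale0r // Hw.
Qed.

Lemma nakayama (S : Q -> Prop) :
  (forall s, S s -> exists ss : nat -> Q, (forall i, S (ss i)) /\
      s = \sum_(i <- iota 0 d) cact piQ (x i) (ss i)) ->
  forall s, S s -> s = 0.
Proof.
move=> HS s0 Ss0.
have [nxt Hnxt] : exists nxt : Q -> nat -> Q, forall s, S s ->
    (forall i, S (nxt s i)) /\ s = \sum_(i <- iota 0 d) cact piQ (x i) (nxt s i).
  exists (fun s => match pselect (S s) with left H => projT1 (cid (HS s H)) | right _ => fun _ => 0 end).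
  move=> s Ss; case: (pselect (S s)) => [H|//]; case: cid => ss /= Hss; exact: Hss.
pose q := sw nxt s0.
have Hq : forall w, S (q w) /\ q w = \sum_(i <- iota 0 d) cact piQ (x i) (q (i :: w)).
  elim => [|i w [Sw _]] /=; first by split => //; exact: (proj2 (Hnxt _ Ss0)).
  have Siw : S (nxt (q w) i) by case: (Hnxt _ Sw) => H _; apply: H.
  by split => //; exact: (proj2 (Hnxt _ Siw)).
pose HM M c := \sum_(n < M.+1) \sum_(w <- words d n) V w c *: q w.
pose h c := HM (Ndeg c) c.
have Htr : forall c M, (Ndeg c <= M)%N -> HM M c = h c.
  move=> c M HM'; rewrite /h /HM.
  apply: (sum_trunc (A := fun n => \sum_(w <- words d n) V w c *: q w)) => // n Hn.
  exact: Vsum_vanish.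
have HMlin : forall M a u v, HM M (a *: u + v) = a *: HM M u + HM M v.
  move=> M a u v; rewrite /HM scaler_sumr -big_split; apply: eq_bigr => n _.
  rewrite scaler_sumr -big_split; apply: eq_bigr => w _.
  by rewrite (Vw_lin HC Hxl) scalerDl scalerA.
have hlin : islin h.
  move=> a u v; pose M := (Ndeg (a *: u + v) + Ndeg u + Ndeg v)%N.
  have H1 : (Ndeg (a *: u + v) <= M)%N by rewrite /M -addnA leq_addr.
  have H2 : (Ndeg u <= M)%N by rewrite /M -addnA addnCA leq_addr.
  have H3 : (Ndeg v <= M)%N by rewrite /M leq_addl.
  by rewrite -(Htr _ M H1) -(Htr _ M H2) -(Htr _ M H3) HMlin.
pose GM M v u := \sum_(n < M.+1) \sum_(w <- words d n) \sum_(i <- iota 0 d)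
                   (V w v * x i u) *: q (i :: w).
pose G v u := GM (Ndeg v) v u.
have Gtr : forall v u M, (Ndeg v <= M)%N -> GM M v u = G v u.
  move=> v u M HM'; rewrite /G /GM.
  apply: (sum_trunc (A := fun n => \sum_(w <- words d n) \sum_(i <- iota 0 d)
                   (V w v * x i u) *: q (i :: w))) => // n Hn.
  rewrite big1_seq // => w /andP [_ /words_size Hw]; rewrite big1 // => i _.
  by rewrite (Vw_vanish HC He Hxl Hxe (@Ndeg_P v)) ?mul0r ?scale0r // Hw.
have Glin1 : forall v, islin (G v).
  move=> v; apply: islin_sumf => n; apply: islin_sumf => w; apply: islin_sumf => i.
  by apply: islin_sc; apply: lformM.
have GMlin : forall M a y z u, GM M (a *: y + z) u = a *: GM M y u + GM M z u.
  move=> M a y z u; rewrite /GM scaler_sumr -big_split; apply: eq_bigr => n _.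
  rewrite scaler_sumr -big_split; apply: eq_bigr => w _.
  rewrite scaler_sumr -big_split; apply: eq_bigr => i _.
  by rewrite (Vw_lin HC Hxl) mulrDl scalerDl !scalerA mulrA.
have Glin2 : forall a y z u, G (a *: y + z) u = a *: G y u + G z u.
  move=> a y z u; pose M := (Ndeg (a *: y + z) + Ndeg y + Ndeg z)%N.
  have H1 : (Ndeg (a *: y + z) <= M)%N by rewrite /M -addnA leq_addr.
  have H2 : (Ndeg y <= M)%N by rewrite /M -addnA addnCA leq_addr.
  have H3 : (Ndeg z <= M)%N by rewrite /M leq_addl.
  by rewrite -(Gtr _ u M H1) -(Gtr _ u M H2) -(Gtr _ u M H3) GMlin.
have piG : forall v, piQ (G v) = h v.
  move=> v; rewrite /G /GM (pi_sum HQ); last first.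
    move=> n; apply: islin_sumf => w; apply: islin_sumf => i.
    by apply: islin_sc; apply: lformM.
  apply: eq_bigr => n _; rewrite (pi_sum HQ); last first.
    move=> w; apply: islin_sumf => i.
    by apply: islin_sc; apply: lformM.
  apply: eq_bigr => w _; rewrite (pi_sum HQ); last first.
    by move=> i; apply: islin_sc; apply: lformM.
  rewrite [in RHS](proj2 (Hq w)) scaler_sumr; apply: eq_bigr => i _.
  rewrite /cact -(piZ HQ); last exact: islin_sc.
  apply: (pi_ext HQ); first by apply: islinZf; exact: islin_sc.
  by move=> u; rewrite scalerA.
have key : forall c, \sum_(ab <- mu c) G ab.2 ab.1 = h c - eps c *: s0.
  move=> c; pose M := (Ndeg c + \sum_(ab <- mu c) Ndeg ab.2)%N.
  transitivity (\sum_(ab <- mu c) GM M ab.2 ab.1).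
    apply: eq_big_seq => ab Hab; rewrite Gtr //.
    by rewrite /M (leq_trans (leq_sum_seq (fun ab => Ndeg ab.2) Hab)) // leq_addl.
  transitivity (\sum_(n < M.+1) \sum_(w <- words d n.+1) V w c *: q w).
    rewrite /GM exchange_big /=; apply: eq_bigr => n _.
    rewrite sum_wordsS [in RHS]exchange_big [in LHS]exchange_big; apply: eq_bigr => w _.
    rewrite exchange_big; apply: eq_bigr => i _.
    by rewrite /= scaler_suml; apply: eq_bigr => ab _; rewrite mulrC.
  rewrite -(Htr c M.+1); last by rewrite /M leqW // leq_addr.
  rewrite /HM [in RHS]big_ord_recl.
  have -> : \sum_(w <- words d (@ord0 M.+1)) V w c *: q w = eps c *: s0.
    by rewrite /= big_cons big_nil addr0.
  by rewrite [eps c *: s0 + _]addrC addrK.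
have E1 : piQ h = piQ (fun c => \sum_(ab <- mu c) G ab.2 ab.1).
  case: HQ => _ _ H3 _; have := H3 G Glin1 Glin2; rewrite /tsum /= => ->.
  by symmetry; apply: (pi_ext HQ hlin).
have E2 : piQ (fun c => \sum_(ab <- mu c) G ab.2 ab.1) =
          piQ (fun c => (-1) *: (eps c *: s0) + h c).
  apply: (pi_ext HQ); first by apply: islinDf => //; apply: islinZf; apply: islin_sc; exact: (eps_lf HC).
  by move=> c; rewrite key scaleN1r addrC.
move: E1; rewrite E2 (pi_lin HQ) //; last by apply: islin_sc; exact: (eps_lf HC).
rewrite (pi_unit HQ) -{1}(add0r (piQ h)) => /addIr /esym /eqP.
by rewrite scaleN1r oppr_eq0 => /eqP.
Qed.

End Nakayama.
Section TensorZero.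
Variables (k : fieldType) (C : lmodType k).

Lemma tensor_zero n (u v : nat -> C) :
  (forall al : C -> k, lform al -> \sum_(i < n) al (u i) *: v i = 0) ->
  forall B : C -> C -> k, (forall y, lform (fun x => B x y)) -> (forall x, lform (B x)) ->
  \sum_(i < n) B (u i) (v i) = 0.
Proof.
elim: n v => [|n IH] v Hv B HB1 HB2; first by rewrite big_ord0.
case: (pselect (exists lam : nat -> k, u n = \sum_(i < n) lam i *: u i)) => [[lam Hlam]|Hn].
  pose v' i := v i + lam i *: v n.
  have -> : \sum_(i < n.+1) B (u i) (v i) = \sum_(i < n) B (u i) (v' i).
    rewrite big_ord_recr /= Hlam (lf_sum _ _ (HB1 _)).
    rewrite -big_split /=; apply: eq_bigr => i _.
    by rewrite /v' (lfD (HB2 _)) (lfZ (HB1 _)) (lfZ (HB2 _)).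
  apply: IH => // al Hal.
  have := Hv al Hal; rewrite big_ord_recr /= Hlam (lf_sum _ _ Hal) scaler_suml.
  rewrite -big_split /= => H0; apply: (etrans _ H0); apply: eq_bigr => i _.
  by rewrite /v' scalerDr (lfZ Hal) scalerA mulrC.
have [h [hl hP]] : exists h : C -> k^o, islin h /\
    forall r : 'rV[k]_(n.+1), h (\sum_(i < n.+1) r 0 i *: u i) = r 0 ord_max.
  apply: ext_lin.
  - move=> a r r'; rewrite scaler_sumr -big_split /=; apply: eq_bigr => i _.
    by rewrite !mxE scalerDl scalerA.
  - by move=> a r r'; rewrite !mxE.
  - move=> r Hr; apply: contrapT => Hrn; apply: Hn.
    exists (fun i => - (r 0 (inord i) / r 0 ord_max)).
    move: Hr; rewrite big_ord_recr /= => /eqP; rewrite addr_eq0 => /eqP Hr.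
    apply: (@scalerI _ _ (r 0 ord_max)); first by apply/eqP.
    have -> : r 0 ord_max *: u n = - \sum_(i < n) r 0 (widen_ord (leqnSn n) i) *: u i.
      by rewrite Hr opprK.
    rewrite scaler_sumr -sumrN; apply: eq_bigr => i _.
    rewrite scalerA mulrN [r 0 ord_max * _]mulrC -mulrA mulVf ?mulr1; last by apply/eqP.
    rewrite scaleNr; congr (- (_ *: _)); congr (r 0 _); apply: val_inj.
    by rewrite /= inordK // (ltn_trans (ltn_ord i)).
have hu : forall j : 'I_n.+1, h (u j) = (j == ord_max)%:R.
  move=> j; have := hP (delta_mx 0 j).
  rewrite (bigD1 j) //= mxE !eqxx scale1r big1 ?addr0.
    by move=> ->; rewrite mxE eqxx /= eq_sym.
  by move=> i /negbTE Hi; rewrite mxE eqxx Hi scale0r.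
have vn0 : v n = 0.
  have := Hv h (islin_lform hl); rewrite big_ord_recr /=.
  have -> : h (u n) = 1 by have := hu ord_max; rewrite eqxx.
  rewrite scale1r big1 ?add0r // => i _.
  have := hu (widen_ord (leqnSn n) i); rewrite /= => ->.
  by rewrite (_ : (_ == _) = false) ?scale0r //; apply/negbTE; rewrite neq_ltn /= ltn_ord.
rewrite big_ord_recr /= vn0 (lf0 (HB2 (u n))) addr0; apply: (IH v _ B HB1 HB2) => al Hal.
by have := Hv al Hal; rewrite big_ord_recr /= vn0 scaler0 addr0.
Qed.

End TensorZero.

Section Inj.
Variables (k : fieldType) (C : lmodType k) (mu : C -> seq (C * C)) (eps : C -> k) (e : C).
Hypothesis HC : is_coalgebra mu eps.
Hypothesis He : coaugmentation mu eps e.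

Definition rc (x : C -> k) (c : C) : C := \sum_(ab <- mu c) x ab.2 *: ab.1.
Definition lc (x : C -> k) (c : C) : C := \sum_(ab <- mu c) x ab.1 *: ab.2.

Lemma lform_comp (V : lmodType k) (t : V -> k) (f : C -> V) : lform t -> islin f -> lform (fun c => t (f c)).
Proof. by move=> Ht Hf a x y; rewrite Hf (lfD Ht) (lfZ Ht). Qed.

Lemma mu_linV (V : lmodType k) (B : C -> C -> V) :
  (forall y, islin (fun x => B x y)) -> (forall x, islin (B x)) ->
  islin (fun c => \sum_(ab <- mu c) B ab.1 ab.2).
Proof.
move=> H1 H2 a u v; apply: eq_by_forms => t Ht.
rewrite (lfD Ht) (lfZ Ht) !(lf_sum _ _ Ht).
have := mu_lin HC (b := fun x y => t (B x y)); apply.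
- by move=> y; apply: (lform_comp Ht (H1 y)).
- by move=> x; apply: (lform_comp Ht (H2 x)).
Qed.

Lemma rc_lin x : lform x -> islin (rc x).
Proof.
move=> Hx; apply: (mu_linV (B := fun a b => x b *: a)).
- by move=> y a u v; rewrite scalerDr !scalerA mulrC.
- by move=> z a u v; rewrite Hx scalerDl scalerA.
Qed.

Lemma lc_lin x : lform x -> islin (lc x).
Proof.
move=> Hx; apply: (mu_linV (B := fun a b => x a *: b)).
- by move=> y a u v; rewrite Hx scalerDl scalerA.
- by move=> z a u v; rewrite scalerDr !scalerA mulrC.
Qed.

Lemma good_zero v : (forall t, lform t -> t e = 0 -> t v = 0) -> v = eps v *: e.
Proof.
move=> H; apply/eqP; rewrite -subr_eq0; apply/eqP/sep => t Ht.
rewrite (lfB Ht) (lfZ Ht).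
have Ht' : lform (fun c => t c - t e * eps c).
  move=> a x y; rewrite Ht (eps_lf HC); ring.
have := H _ Ht'; rewrite (eps_e He) mulr1 subrr => /(_ erefl) /eqP.
by rewrite subr_eq0 mulrC => /eqP ->; rewrite subrr.
Qed.

Lemma lc_split al c : lform al ->
  lc al c = al e *: c + lc (fun z => al z - al e * eps z) c.
Proof.
move=> Hal; rewrite /lc -{2}(counitL HC c) scaler_sumr -big_split /=.
by apply: eq_bigr => ab _; rewrite scalerBl scalerA addrC subrK.
Qed.

Lemma prim_formula c :
  (forall al, lform al -> al e = 0 -> lc al c = al c *: e) ->
  forall B : C -> C -> k, (forall y, lform (fun x => B x y)) -> (forall x, lform (B x)) ->
  \sum_(ab <- mu c) B ab.1 ab.2 = B e c + B c e - eps c * B e e.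
Proof.
move=> H B HB1 HB2.
pose L := mu c ++ [:: (e, - c); (c, - e); (e, eps c *: e)].
have HL : forall F : C -> C -> k, \sum_(p <- L) F p.1 p.2 = \sum_(i < size L) F (nth (0,0) L i).1 (nth (0,0) L i).2.
  by move=> F; rewrite (big_nth (0,0)) big_mkord.
have HLv : forall F : C -> C -> C, \sum_(p <- L) F p.1 p.2 = \sum_(i < size L) F (nth (0,0) L i).1 (nth (0,0) L i).2.
  by move=> F; rewrite (big_nth (0,0)) big_mkord.
have Hhyp : forall al : C -> k, lform al ->
    \sum_(i < size L) al (nth (0,0) L i).1 *: (nth (0,0) L i).2 = 0.
  move=> al Hal; rewrite -(HLv (fun a b => al a *: b)) big_cat !big_cons big_nil /= addr0.
  pose be := fun z => al z - al e * eps z.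
  have Hbe : lform be by move=> a x y; rewrite /be Hal (eps_lf HC); ring.
  have Hbee : be e = 0 by rewrite /be (eps_e He) mulr1 subrr.
  rewrite -/(lc al c) (lc_split c Hal) -/be (H _ Hbe Hbee) /be.
  rewrite !scalerN scalerBl !scalerA (mulrC (al e)).
  set A := al e *: c; set Bv := al c *: e; set Cv := (eps c * al e) *: e.
  rewrite (_ : - A + (- Bv + Cv) = - (A + (Bv - Cv))) ?subrr //.
  by rewrite [in RHS]opprD [in RHS]opprB [Cv - Bv]addrC.
have := tensor_zero (u := fun i => (nth (0,0) L i).1) (v := fun i => (nth (0,0) L i).2) Hhyp HB1 HB2; rewrite -HL big_cat !big_cons big_nil /= addr0.
rewrite (lfN (HB2 _)) (lfN (HB2 _)) (lfZ (HB2 _)).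
by move=> /eqP; rewrite addr_eq0 => /eqP ->; ring.
Qed.

Lemma eps_rc x c : lform x -> eps (rc x c) = \sum_(ab <- mu c) eps ab.1 * x ab.2.
Proof.
move=> Hx; rewrite /rc (lf_sum _ _ (eps_lf HC)); apply: eq_bigr => ab _.
by rewrite (lfZ (eps_lf HC)) mulrC.
Qed.

Lemma eps_lc x c : lform x -> eps (lc x c) = x c.
Proof.
move=> Hx; rewrite /lc (lf_sum _ _ (eps_lf HC)) -[in RHS](counitR HC c) (lf_sum _ _ Hx).
by apply: eq_bigr => ab _; rewrite (lfZ (eps_lf HC)) (lfZ Hx) mulrC.
Qed.

Lemma lc_deg m al c : lform al -> al e = 0 -> deg_le mu e m.+1 c -> deg_le mu e m (lc al c).
Proof.
move=> Hal Hale Hd t Ht Hk.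
pose t' := fun l : seq C => al (head 0 l) * t (behead l).
have Ht' : multilin_form m.+2 t'.
  move=> l r; rewrite /t'; case: l => [|y l] /= Hs.
  - by apply: lformMr.
  - by apply: lformM; exact: (Ht l r (succn_inj Hs)).
have Hk' : kills_e e m.+2 t'.
  move=> l r; rewrite /t'; case: l => [|y l] /= Hs.
  - by rewrite Hale mul0r.
  - by rewrite (Hk l r (succn_inj Hs)) mulr0.
have := Hd t' Ht' Hk'; rewrite (TT_left HC _ Ht') => <-.
rewrite /lc (lf_sum _ _ (TT_lin HC Ht)); apply: eq_bigr => ab _.
by rewrite (lfZ (TT_lin HC Ht)) /t' /= -(TT_scale mu).
Qed.

Lemma lc_Z x al c : lform x -> lform al -> rc x c = 0 -> rc x (lc al c) = 0.
Proof.
move=> Hx Hal H0; apply: sep => be Hbe.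
pose F := fun c' => \sum_(ab <- mu c') x ab.2 * be ab.1.
have HF : lform F.
  apply: (mu_lin HC (b := fun a b => x b * be a)) => [y|z].
  - by apply: lformM.
  - by apply: lformMr.
have E1 : forall c', be (rc x c') = F c'.
  move=> c'; rewrite /rc (lf_sum _ _ Hbe); apply: eq_bigr => ab _.
  by rewrite (lfZ Hbe).
pose ga := fun a => \sum_(ab <- mu a) al ab.1 * be ab.2.
have Hga : lform ga.
  apply: (mu_lin HC (b := fun a b => al a * be b)) => [y|z].
  - by apply: lformMr.
  - by apply: lformM.
rewrite E1 /lc (lf_sum _ _ HF).
transitivity (ga (rc x c)); last by rewrite H0 (lf0 Hga).
rewrite /rc (lf_sum _ _ Hga).
transitivity (\sum_(ab <- mu c) \sum_(ab' <- mu ab.2) al ab.1 * be ab'.1 * x ab'.2).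
  apply: eq_bigr => ab _; rewrite (lfZ HF) /F mulr_sumr; apply: eq_bigr => ab' _.
  by ring.
rewrite -(coass HC (t := fun a b c0 => al a * be b * x c0)).
- apply: eq_bigr => ab _; rewrite (lfZ Hga) /ga mulr_sumr; apply: eq_bigr => ab' _.
  by ring.
- by move=> y z; apply: lformMr; apply: lformMr.
- by move=> y z; apply: lformMr; apply: lformM.
- by move=> y z; apply: lformM.
Qed.

End Inj.
Section Family.
Variables (k : fieldType) (C : lmodType k) (e : C) (s : seq C).

Lemma family : exists (d : nat) (y : nat -> C -> k), (forall i, lform (y i) /\ y i e = 0) /\
  forall a : nat -> k, (forall i, (i < d)%N -> \sum_(j < size s) a j * y i s`_j = 0) ->
  forall t, lform t -> t e = 0 -> \sum_(j < size s) a j * t s`_j = 0.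
Proof.
pose n0 := size s.
pose Mx (ys : seq (C -> k)) : 'M[k]_(size ys, n0) := \matrix_(i, j) (nth (fun _ => 0) ys i) s`_j.
pose Gd (ys : seq (C -> k)) := forall i, lform (nth (fun _ => 0) ys i) /\ nth (fun _ => 0) ys i e = 0.
pose Pm := fun m => `[< exists ys, Gd ys /\ \rank (Mx ys) = m >].
have ex0 : exists m, Pm m.
  exists (\rank (Mx [::])); apply/asboolP; exists [::]; split => // i.
  by rewrite nth_nil; split => // a x y; rewrite mulr0 addr0.
have ub : forall m, Pm m -> (m <= n0)%N.
  by move=> m /asboolP [ys [_ <-]]; apply: rank_leq_col.
case: (ex_maxnP ex0 ub) => m0 /asboolP [ys0 [Gys0 Hr0]] Hmax.
exists (size ys0), (fun i => nth (fun _ => 0) ys0 i); split; first exact: Gys0.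
move=> a Ha t Ht Hte.
pose ys1 := t :: ys0.
have Gys1 : Gd ys1 by case => [|i] //=.
have Hr1 : (\rank (Mx ys1) <= m0)%N by apply: Hmax; apply/asboolP; exists ys1.
have Hsub : (Mx ys0 <= Mx ys1)%MS.
  apply/row_subP => i.
  have -> : row i (Mx ys0) = row (lift ord0 i) (Mx ys1) by apply/rowP => j; rewrite !mxE.
  exact: row_sub.
have Hsup : (Mx ys1 <= Mx ys0)%MS.
  have [_ <-] := mxrank_leqif_sup Hsub.
  by rewrite eqn_leq Hr0 Hr1 /= -Hr0 mxrank_leqif_sup.
have Hw : (row ord0 (Mx ys1) <= Mx ys0)%MS := submx_trans (row_sub _ _) Hsup.
case/submxP: Hw => D HD.
pose av : 'cV[k]_n0 := \col_j a j.
have HMa : Mx ys0 *m av = 0.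
  apply/colP => i; rewrite !mxE; apply: etrans _ (Ha i (ltn_ord i)); apply: eq_bigr => j _.
  by rewrite !mxE mulrC.
have := congr1 (fun M => (M *m av) 0 0) HD; rewrite /= -mulmxA HMa mulmx0 mxE.
rewrite !mxE => H0; apply: etrans _ H0; apply: eq_bigr => j _; rewrite !mxE mulrC //.
Qed.

End Family.

Section Inj2.
Variables (k : fieldType) (C : lmodType k) (mu : C -> seq (C * C)) (eps : C -> k) (e : C).
Hypothesis HC : is_coalgebra mu eps.
Hypothesis He : coaugmentation mu eps e.
Hypothesis Hconil : conilpotent mu e.
Variable s : seq C.
Hypothesis Hs : forall c, in_H1 mu e c ->
    exists (lam : k) (a : nat -> k), c = lam *: e + \sum_(i < size s) a i *: s`_i.
Variables (x : nat -> C -> k) (d : nat).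
Hypothesis Hxl : forall i, lform (x i).
Hypothesis Hxe : forall i, x i e = 0.
Hypothesis Hfam : forall a : nat -> k, (forall i, (i < d)%N -> \sum_(j < size s) a j * x i s`_j = 0) ->
  forall t, lform t -> t e = 0 -> \sum_(j < size s) a j * t s`_j = 0.

Lemma inj_deg m : forall c, deg_le mu e m c -> (forall i, (i < d)%N -> rc mu (x i) c = 0) ->
  c = eps c *: e.
Proof.
elim: m => [|m IH] c Hd HZ.
  apply: (good_zero HC He) => t Ht Hte.
  have := Hd (fun l => t (head 0 l)).
  rewrite /TT /= big_cons big_nil addr0 => -> //.
  - move=> l r; case: l => [|y l] /= Hs0; first exact: Ht.
    by move: Hs0; rewrite addSn.
  - move=> l r; case: l => [|y l] /= Hs0; first exact: Hte.
    by move: Hs0; rewrite addSn.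
have Hlc : forall al, lform al -> al e = 0 -> lc mu al c = al c *: e.
  move=> al Hal Hale; rewrite -(eps_lc HC c Hal).
  apply: IH; first exact: (lc_deg HC Hal Hale Hd).
  by move=> i Hi; apply: (lc_Z HC (Hxl i) Hal); apply: HZ.
have PF := prim_formula HC He Hlc.
have H1c : in_H1 mu e c.
  move=> B [HB1 HB2] Be1 Be2; rewrite /tsum PF // !Be1 Be2.
  by rewrite mulr0 addr0 subrr.
have [lam [a Hc]] := Hs H1c.
have Hxc : forall i, (i < d)%N -> x i c = 0.
  move=> i Hi; have := congr1 eps (HZ i Hi); rewrite (eps_rc HC c (Hxl i)).
  rewrite (PF (fun a b => eps a * x i b)).
  - by rewrite (eps_e He) !mul1r Hxe !mulr0 !addr0 subr0 (lf0 (eps_lf HC)).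
  - by move=> z; apply: lformMr; exact: (eps_lf HC).
  - by move=> z; apply: lformM.
have Ha : forall i, (i < d)%N -> \sum_(j < size s) a j * x i s`_j = 0.
  move=> i Hi; have := Hxc i Hi; rewrite Hc (lfD (Hxl i)) (lfZ (Hxl i)) Hxe mulr0 add0r.
  rewrite (lf_sum _ _ (Hxl i)) => H0; apply: etrans _ H0; apply: eq_bigr => j _.
  by rewrite (lfZ (Hxl i)).
apply: (good_zero HC He) => t Ht Hte.
rewrite Hc (lfD Ht) (lfZ Ht) Hte mulr0 add0r (lf_sum _ _ Ht).
rewrite -[RHS](Hfam Ha Ht Hte); apply: eq_bigr => j _.
by rewrite (lfZ Ht).
Qed.

Lemma inj c : (forall i, (i < d)%N -> rc mu (x i) c = 0) -> c = eps c *: e.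
Proof. by have [m Hm] := Hconil c; apply: (@inj_deg m c). Qed.

Lemma Kdec (P : lmodType k) (g : C -> P) : islin g -> g e = 0 ->
  exists gs : nat -> C -> P, (forall i, islin (gs i)) /\
    forall c, g c = \sum_(i <- iota 0 d) \sum_(ab <- mu c) x i ab.2 *: gs i ab.1.
Proof.
move=> Hg Hge.
pose Phi := fun c => [ffun j : 'I_d => rc mu (x j) c].
have HPhi : islin Phi.
  by move=> a u v; apply/ffunP => j; rewrite !ffunE (rc_lin HC (Hxl j)).
have Hker : forall c, Phi c = 0 -> g c = 0.
  move=> c Hc; rewrite (@inj c).
    by rewrite (islinZ Hg) Hge scaler0.
  move=> i Hi; have := congr1 (fun f : {ffun 'I_d -> C} => f (Ordinal Hi)) Hc.
  by rewrite /= !ffunE.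
have [h [hl hP]] := ext_lin HPhi Hg Hker.
exists (fun i c => h [ffun j : 'I_d => if (j : nat) == i then c else 0]); split.
  move=> i a u v; rewrite -hl; congr h; apply/ffunP => j; rewrite !ffunE.
  by case: eqP => _; rewrite ?scaler0 ?addr0.
move=> c; rewrite -hP.
have -> : Phi c = \sum_(i <- iota 0 d) [ffun j : 'I_d => if (j : nat) == i then rc mu (x i) c else 0].
  apply/ffunP => j; rewrite sum_ffunE ffunE.
  rewrite (bigD1_seq (val j)) ?iota_uniq ?mem_iota /= ?ltn_ord //.
  rewrite ffunE eqxx big1 ?addr0 // => i /negbTE Hi.
  by rewrite ffunE eq_sym Hi.
rewrite (islin_sum _ _ hl); apply: eq_bigr => i _.
have Hgi : islin (fun c => h [ffun j : 'I_d => if (j : nat) == i then c else 0]).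
  move=> a u v; rewrite -hl; congr h; apply/ffunP => j; rewrite !ffunE.
  by case: eqP => _; rewrite ?scaler0 ?addr0.
rewrite /rc.
transitivity ((fun c => h [ffun j : 'I_d => if (j : nat) == i then c else 0])
   (\sum_(ab <- mu c) x i ab.2 *: ab.1)); first by [].
rewrite (islin_sum _ _ Hgi); apply: eq_bigr => ab _.
by rewrite (islinZ Hgi).
Qed.

End Inj2.
Section Main.
Variables (k : fieldType) (C : lmodType k) (mu : C -> seq (C * C)) (eps : C -> k) (e : C).
Hypothesis HC : is_coalgebra mu eps.
Hypothesis He : coaugmentation mu eps e.
Hypothesis Hconil : conilpotent mu e.
Hypothesis HH1 : H1_findim mu e.
Variable R : (C -> k) -> Prop.
Hypothesis HRl : forall r, R r -> lform r.
Hypothesis HRd : forall phi, lform phi -> forall sv : seq C,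
  exists r, R r /\ forall c, c \in sv -> r c = phi c.
Variables (P Q : lmodType k) (piP : (C -> P) -> P) (piQ : (C -> Q) -> Q).
Hypothesis HP : is_contramodule mu eps piP.
Hypothesis HQ : is_contramodule mu eps piQ.

Lemma easy_dir f : contra_morph piP piQ f -> Rmod_morph R piP piQ f.
Proof.
move=> [fl fc]; split; first exact: islinD.
move=> r Rr p; rewrite /cact fc; last exact: islin_sc (HRl Rr).
apply: (pi_ext HQ); first exact: islin_sc (HRl Rr).
by move=> c; rewrite (islinZ fl).
Qed.

Lemma act_dec (M : lmodType k) (piM : (C -> M) -> M) (HM : is_contramodule mu eps piM)
  (x : nat -> C -> k) (d : nat) (Hxl : forall i, lform (x i))
  (psi : C -> k) (gs : nat -> C -> k) (Hgs : forall i, lform (gs i))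
  (Hpsi : forall c, psi c = \sum_(i <- iota 0 d) \sum_(ab <- mu c) x i ab.2 * gs i ab.1) (p : M) :
  cact piM psi p = \sum_(i <- iota 0 d) cact piM (x i) (cact piM (gs i) p).
Proof.
have Hl : forall i, lform (fun c => \sum_(ab <- mu c) x i ab.2 * gs i ab.1).
  move=> i; apply: (mu_lin HC (b := fun a b => x i b * gs i a)) => [y|z].
  - by apply: lformM.
  - by apply: lformMr.
rewrite [LHS]/cact.
transitivity (piM (fun c => \sum_(i <- iota 0 d) (\sum_(ab <- mu c) x i ab.2 * gs i ab.1) *: p)).
  apply: (pi_ext HM); first by apply: islin_sumf => i; apply: islin_sc.
  by move=> c; rewrite Hpsi scaler_suml.
rewrite (pi_sum HM); last by move=> i; apply: islin_sc.
apply: eq_bigr => i _; rewrite [cact piM (gs i) p]/cact -(pi_star HM (Hxl i)); last exact: islin_sc.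
apply: (pi_ext HM).
  apply: (mu_linV HC (B := fun a b => x i b *: (gs i a *: p))) => [y|z].
  - move=> a u v; rewrite (Hgs i) scalerDl !scalerDr !scalerA.
    by rewrite mulrA [x i y * a]mulrC.
  - by move=> a u v; rewrite (Hxl i) scalerDl -scalerA.
by move=> c; rewrite scaler_suml; apply: eq_bigr => ab _; rewrite scalerA.
Qed.

Lemma hard_dir f : Rmod_morph R piP piQ f -> contra_morph piP piQ f.
Proof.
move=> [fadd fR].
have f0 : f 0 = 0 by apply: (addrI (f 0)); rewrite -fadd !addr0.
have fN : forall u, f (- u) = - f u.
  by move=> u; apply/eqP; rewrite -addr_eq0 -fadd addNr f0.
have fB : forall u v, f (u - v) = f u - f v by move=> u v; rewrite fadd fN.
have fsum : forall (I : Type) (r : seq I) (F : I -> P), f (\sum_(i <- r) F i) = \sum_(i <- r) f (F i).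
  move=> I r F; elim: r => [|a r IH]; first by rewrite !big_nil.
  by rewrite !big_cons fadd IH.
have [s Hs] := HH1.
have [d [y [Hy Hyfam]]] := family e s.
pose x i := projT1 (cid (HRd (proj1 (Hy i)) (e :: s))).
have HxP : forall i, R (x i) /\ forall c, c \in e :: s -> x i c = y i c.
  by move=> i; rewrite /x; case: cid.
have HxR : forall i, R (x i) by move=> i; case: (HxP i).
have Hxl : forall i, lform (x i) by move=> i; apply: HRl.
have Hxe : forall i, x i e = 0.
  by move=> i; case: (HxP i) => _ ->; [case: (Hy i) | rewrite mem_head].
have Hxs : forall i j, (j < size s)%N -> x i s`_j = y i s`_j.
  by move=> i j Hj; case: (HxP i) => _ ->; rewrite // inE mem_nth ?orbT.
have Hfam : forall a : nat -> k, (forall i, (i < d)%N -> \sum_(j < size s) a j * x i s`_j = 0) ->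
    forall t, lform t -> t e = 0 -> \sum_(j < size s) a j * t s`_j = 0.
  move=> a Ha; apply: Hyfam => i Hi; apply: etrans _ (Ha i Hi); apply: eq_bigr => j _.
  by rewrite Hxs.
have Kd := Kdec HC He Hconil Hs Hxl Hxe Hfam.
have fall : forall phi, lform phi -> forall p, f (cact piP phi p) = cact piQ phi (f p).
  pose S := fun q => exists phi p, lform phi /\ q = f (cact piP phi p) - cact piQ phi (f p).
  suff HS : forall q, S q -> q = 0.
    move=> phi Hphi p; apply/eqP; rewrite -subr_eq0; apply/eqP; apply: HS.
    by exists phi, p.
  apply: (nakayama HC He Hconil Hxl Hxe HQ).
  move=> q [phi [p [Hphi ->]]].
  have [r [Rr Hr]] := HRd Hphi [:: e].
  have Hrl := HRl Rr.
  pose psi := fun c => phi c - r c.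
  have Hpsi : lform psi by move=> a u v; rewrite /psi Hphi Hrl; ring.
  have Hpsie : psi e = 0 by rewrite /psi Hr ?mem_head // subrr.
  have [gs [Hgs Hg]] := Kd (k^o) psi (lform_islin Hpsi) Hpsie.
  have Hgsl : forall i, lform (gs i) by move=> i; apply: islin_lform.
  exists (fun i => f (cact piP (gs i) p) - cact piQ (gs i) (f p)); split.
    by move=> i; exists (gs i), p; split.
  have Hsplit : forall (M : lmodType k) (piM : (C -> M) -> M), is_contramodule mu eps piM ->
      forall m, cact piM phi m = cact piM r m + cact piM psi m.
    move=> M piM HM m; rewrite -(cact_addl HM) //.
    apply: (pi_ext HM); first by apply: islin_sc => a u v; rewrite Hrl Hpsi; ring.
    by move=> c; rewrite /psi addrC subrK.
  have Hdec : forall (M : lmodType k) (piM : (C -> M) -> M), is_contramodule mu eps piM ->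
      forall m, cact piM psi m = \sum_(i <- iota 0 d) cact piM (x i) (cact piM (gs i) m).
    by move=> M piM HM m; apply: (act_dec HM Hxl Hgsl).
  rewrite (Hsplit _ _ HP) (Hsplit _ _ HQ) fadd (fR _ Rr) opprD addrACA subrr add0r.
  rewrite (Hdec _ _ HP) (Hdec _ _ HQ) fsum -sumrB; apply: eq_bigr => i _.
  by rewrite (fR _ (HxR i)) -(cactB HQ).
have fl : islin f.
  move=> a u v; rewrite fadd; congr (_ + _).
  have Hae : lform (fun c => a * eps c) by apply: lformM; exact: (eps_lf HC).
  have E : forall (M : lmodType k) (piM : (C -> M) -> M), is_contramodule mu eps piM ->
      forall m, cact piM (fun c => a * eps c) m = a *: m.
    move=> M piM HM m; rewrite /cact -[in RHS](pi_unit HM (a *: m)).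
    apply: (pi_ext HM); first by apply: islin_sc; exact: (eps_lf HC).
    by move=> c; rewrite !scalerA mulrC.
  by rewrite -(E _ _ HP) fall // E.
split => // g Hg.
pose S := fun q => exists g, islin g /\ q = f (piP g) - piQ (fun c => f (g c)).
suff HS : forall q, S q -> q = 0.
  by apply/eqP; rewrite -subr_eq0; apply/eqP; apply: HS; exists g.
apply: (nakayama HC He Hconil Hxl Hxe HQ).
move=> q [g0 [Hg0 ->]].
pose g' := fun c => g0 c - eps c *: g0 e.
have Hg' : islin g'.
  move=> a u v; rewrite /g' Hg0 (eps_lf HC) scalerDl -scalerA scalerBr.
  by rewrite opprD addrACA.
have Hg'e : g' e = 0 by rewrite /g' (eps_e He) scale1r subrr.
have [gs [Hgs Hgd]] := Kd P g' Hg' Hg'e.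
have flc : forall h : C -> P, islin h -> islin (fun c => f (h c)).
  by move=> h Hh a u v; rewrite (Hh a u v) (fl a).
exists (fun i => f (piP (gs i)) - piQ (fun c => f (gs i c))); split.
  by move=> i; exists (gs i); split.
have Hst : forall i, islin (fun c => \sum_(ab <- mu c) x i ab.2 *: gs i ab.1).
  move=> i; apply: (mu_linV HC (B := fun a b => x i b *: gs i a)) => [z|z].
  - by move=> a u v; rewrite (Hgs i) scalerDr !scalerA mulrC.
  - by move=> a u v; rewrite (Hxl i) scalerDl scalerA.
have Hst' : forall i, islin (fun c => \sum_(ab <- mu c) x i ab.2 *: f (gs i ab.1)).
  move=> i; apply: (mu_linV HC (B := fun a b => x i b *: f (gs i a))) => [z|z].
  - by move=> a u v; rewrite (Hgs i) fl scalerDr !scalerA mulrC.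
  - by move=> a u v; rewrite (Hxl i) scalerDl scalerA.
have E1 : piP g0 = g0 e + \sum_(i <- iota 0 d) cact piP (x i) (piP (gs i)).
  transitivity (piP (fun c => eps c *: g0 e + \sum_(i <- iota 0 d) \sum_(ab <- mu c) x i ab.2 *: gs i ab.1)).
    apply: (pi_ext HP).
      by apply: islinDf; [apply: islin_sc; exact: (eps_lf HC) | exact: islin_sumf].
    by move=> c; rewrite -Hgd /g' addrC subrK.
  rewrite (piD HP); [|apply: islin_sc; exact: (eps_lf HC)| exact: islin_sumf].
  rewrite (pi_unit HP) (pi_sum HP) //; congr (_ + _); apply: eq_bigr => i _.
  by rewrite (pi_star HP).
have E2 : piQ (fun c => f (g0 c)) = f (g0 e) + \sum_(i <- iota 0 d) cact piQ (x i) (piQ (fun c => f (gs i c))).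
  transitivity (piQ (fun c => eps c *: f (g0 e) + \sum_(i <- iota 0 d) \sum_(ab <- mu c) x i ab.2 *: f (gs i ab.1))).
    apply: (pi_ext HQ).
      by apply: islinDf; [apply: islin_sc; exact: (eps_lf HC) | exact: islin_sumf].
    move=> c; rewrite -[g0 c](subrK (eps c *: g0 e)) -/(g' c) Hgd fadd (islinZ fl).
    rewrite addrC; congr (_ + _); rewrite fsum; apply: eq_bigr => i _.
    by rewrite fsum; apply: eq_bigr => ab _; rewrite (islinZ fl).
  rewrite (piD HQ); [|apply: islin_sc; exact: (eps_lf HC)| exact: islin_sumf].
  rewrite (pi_unit HQ) (pi_sum HQ) //; congr (_ + _); apply: eq_bigr => i _.
  exact: (pi_star HQ (Hxl i) (flc _ (Hgs i))).
rewrite E1 E2 fadd fsum opprD addrACA subrr add0r -sumrB; apply: eq_bigr => i _.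
by rewrite (fall _ (Hxl i)) -(cactB HQ).
Qed.

End Main.
(* Full faithfulness of a forgetful functor (which is the identity on
   underlying maps, hence automatically faithful) is stated as: a map
   f : P -> Q is a contramodule morphism iff it is a module morphism. *)
Theorem theorem1p1 (k : fieldType) (C : lmodType k)
    (mu : C -> seq (C * C)) (eps : C -> k) (e : C)
    (HC : is_coalgebra mu eps) (He : coaugmentation mu eps e)
    (Hconil : conilpotent mu e) (HH1 : H1_findim mu e) :
  (forall (P Q : lmodType k) (piP : (C -> P) -> P) (piQ : (C -> Q) -> Q),
      is_contramodule mu eps piP -> is_contramodule mu eps piQ ->
      forall f : P -> Q,
        contra_morph piP piQ f <-> Rmod_morph (@lform k C) piP piQ f)
  /\
  (forall R : (C -> k) -> Prop, dense_subring mu eps R ->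
    forall (P Q : lmodType k) (piP : (C -> P) -> P) (piQ : (C -> Q) -> Q),
      is_contramodule mu eps piP -> is_contramodule mu eps piQ ->
      forall f : P -> Q,
        contra_morph piP piQ f <-> Rmod_morph R piP piQ f).
Proof.
split.
  move=> P Q piP piQ HP HQ f.
  have HRl : forall r : C -> k, lform r -> lform r by [].
  have HRd : forall phi, lform phi -> forall sv : seq C,
      exists r, lform r /\ forall c, c \in sv -> r c = phi c.
    by move=> phi Hphi sv; exists phi.
  split; first exact: (@easy_dir k C mu eps (@lform k C) HRl P Q piP piQ HQ f).
  exact: (@hard_dir k C mu eps e HC He Hconil HH1 (@lform k C) HRl HRd P Q piP piQ HP HQ f).
move=> R [HRl _ _ _ HRd] P Q piP piQ HP HQ f.
split; first exact: (@easy_dir k C mu eps R HRl P Q piP piQ HQ f).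
exact: (@hard_dir k C mu eps e HC He Hconil HH1 R HRl HRd P Q piP piQ HP HQ f).
Qed.
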